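(* Let $\sigma\ge0$, $\delta\ge0$, $\underline\gamma>0$, and let sequences $\{\gamma_j\}_{j\ge1}$, $\{\eta_j\}_{j\ge1}$, $\{\alpha_j\}_{j\ge0}$ of reals satisfy, for every $j\ge1$, $\gamma_j\ge\underline\gamma$ and $\gamma_j\eta_j\le\alpha_{j-1}-(1+\sigma)\alpha_j+\gamma_j\delta$. Then: (a) for every $k\ge1$, $\displaystyle\min_{1\le j\le k}\eta_j\le\frac{\alpha_0-(1+\sigma)^k\alpha_k}{\sum_{j=1}^k(1+\sigma)^{j-1}\gamma_j}+\delta$; (b) if $\alpha_j\ge0$ for all $j$, then $\min_{1\le j\le k}\eta_j\le2\delta$ for every $k\ge1$ such that \[ k\ge\min\left\{\frac{1+\sigma}{\sigma}\log\left(\frac{\sigma\alpha_0}{\underline\gamma\delta}+1\right),\ \frac{\alpha_0}{\underline\gamma\delta}\right\}, \] with the convention that the first term equals the second when $\sigma=0$. *)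

(* Defs.v *)
From Stdlib Require Import Reals.
Open Scope R_scope.

(* min_{1 <= j <= k} eta j  (for k >= 1; for k = 0 the value eta 1 is junk). *)
Fixpoint min_upto (eta : nat -> R) (k : nat) : R :=
  match k with
  | O => eta 1%nat
  | S O => eta 1%nat
  | S k' => Rmin (min_upto eta k') (eta k)
  end.

(* sum_{j=1}^k (1+sigma)^(j-1) gamma_j   (for k >= 1) *)
Definition wsum (sigma : R) (gamma : nat -> R) (k : nat) : R :=
  sum_f_R0 (fun i => (1 + sigma) ^ i * gamma (S i)) (k - 1).

Definition threshold (sigma delta g alpha0 : R) : R :=
  if Req_EM_T sigma 0 then alpha0 / (g * delta)
  else Rmin ((1 + sigma) / sigma * ln (sigma * alpha0 / (g * delta) + 1))
            (alpha0 / (g * delta)).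

(* Main.v *)
Require Import Defs.
From Stdlib Require Import Reals Lra Lia Psatz.
Open Scope R_scope.

Lemma min_le (eta : nat -> R) n i : (i <= n)%nat -> min_upto eta (S n) <= eta (S i).
Proof.
  induction n as [|n IH]; intros Hi.
  - replace i with 0%nat by lia. simpl. lra.
  - change (min_upto eta (S (S n))) with (Rmin (min_upto eta (S n)) (eta (S (S n)))).
    destruct (Nat.eq_dec i (S n)) as [->|Hne].
    + apply Rmin_r.
    + eapply Rle_trans; [apply Rmin_l|]. apply IH; lia.
Qed.

Lemma minW (sigma : R) (gamma eta : nat -> R) n m :
  0 <= sigma -> (forall j, (1 <= j)%nat -> 0 <= gamma j) ->
  (forall i, (i <= n)%nat -> m <= eta (S i)) ->
  m * sum_f_R0 (fun i => (1 + sigma) ^ i * gamma (S i)) n <=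
  sum_f_R0 (fun i => (1 + sigma) ^ i * gamma (S i) * eta (S i)) n.
Proof.
  intros Hs Hg. induction n as [|n IH]; intros Hm; simpl.
  - assert (H := Hm 0%nat (le_n _)). assert (0 <= gamma 1%nat) by (apply Hg; lia).
    nra.
  - assert (H := Hm (S n) (le_n _)). assert (0 <= gamma (S (S n))) by (apply Hg; lia).
    assert (0 <= (1 + sigma) * (1 + sigma) ^ n) by (apply Rmult_le_pos; [lra| apply pow_le; lra]).
    assert (IH' := IH (fun i Hi => Hm i (le_S _ _ Hi))).
    assert (0 <= (1 + sigma) * (1 + sigma) ^ n * gamma (S (S n))) by (apply Rmult_le_pos; auto).
    nra.
Qed.

Lemma telesc (sigma delta : R) (gamma eta alpha : nat -> R) n :
  0 <= sigma ->
  (forall j : nat, (1 <= j)%nat ->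
     gamma j * eta j <= alpha (j - 1)%nat - (1 + sigma) * alpha j + gamma j * delta) ->
  sum_f_R0 (fun i => (1 + sigma) ^ i * gamma (S i) * eta (S i)) n <=
  alpha 0%nat - (1 + sigma) ^ (S n) * alpha (S n) +
  delta * sum_f_R0 (fun i => (1 + sigma) ^ i * gamma (S i)) n.
Proof.
  intros Hs Hrec. induction n as [|n IH]; simpl.
  - assert (H := Hrec 1%nat (le_n _)). simpl in H. lra.
  - assert (H := Hrec (S (S n)) ltac:(lia)).
    replace (S (S n) - 1)%nat with (S n) in H by lia.
    set (p := (1 + sigma) ^ n) in *.
    assert (0 <= (1 + sigma) * p) by (apply Rmult_le_pos; [lra| apply pow_le; lra]).
    assert (H2 := Rmult_le_compat_l _ _ _ H0 H).
    simpl in IH. fold p in IH. nra.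
Qed.

Lemma wsum_lb (sigma g : R) (gamma : nat -> R) n :
  0 <= sigma -> (forall j, (1 <= j)%nat -> g <= gamma j) ->
  g * sum_f_R0 (fun i => (1 + sigma) ^ i) n <= sum_f_R0 (fun i => (1 + sigma) ^ i * gamma (S i)) n.
Proof.
  intros Hs Hg. induction n as [|n IH]; simpl.
  - assert (H := Hg 1%nat (le_n _)). lra.
  - assert (H := Hg (S (S n)) ltac:(lia)).
    assert (0 <= (1 + sigma) * (1 + sigma) ^ n) by (apply Rmult_le_pos; [lra| apply pow_le; lra]).
    nra.
Qed.

Lemma geo (sigma : R) n :
  sigma * sum_f_R0 (fun i => (1 + sigma) ^ i) n = (1 + sigma) ^ (S n) - 1.
Proof.
  induction n as [|n IH]; simpl in *.
  - ring.
  - rewrite Rmult_plus_distr_l, IH. ring.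
Qed.

Lemma geo_ge (sigma : R) n : 0 <= sigma ->
  INR (S n) <= sum_f_R0 (fun i => (1 + sigma) ^ i) n.
Proof.
  intros Hs. induction n as [|n IH].
  - simpl. lra.
  - rewrite S_INR. change (sum_f_R0 (fun i => (1 + sigma) ^ i) (S n)) with (sum_f_R0 (fun i => (1 + sigma) ^ i) n + (1 + sigma) ^ S n).
    assert (1 <= (1 + sigma) ^ S n) by (apply pow_R1_Rle; lra). lra.
Qed.

Lemma ln_lb (s : R) : 0 <= s -> s / (1 + s) <= ln (1 + s).
Proof.
  intros Hs. assert (H := exp_ineq1_le (- ln (1 + s))).
  rewrite exp_Ropp, exp_ln in H by lra.
  assert (s / (1 + s) = 1 - / (1 + s)) by (field; lra). lra.
Qed.

Theorem lemmaA2 (sigma delta g : R) (gamma eta alpha : nat -> R)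
  (Hsigma : 0 <= sigma) (Hdelta : 0 <= delta) (Hg : 0 < g)
  (Hgamma : forall j : nat, (1 <= j)%nat -> g <= gamma j)
  (Hrec : forall j : nat, (1 <= j)%nat ->
     gamma j * eta j <= alpha (j - 1)%nat - (1 + sigma) * alpha j + gamma j * delta) :
  (forall k : nat, (1 <= k)%nat ->
     min_upto eta k <=
       (alpha 0%nat - (1 + sigma) ^ k * alpha k) / wsum sigma gamma k + delta)
  /\
  ((forall j : nat, 0 <= alpha j) -> 0 < delta ->
     forall k : nat, (1 <= k)%nat ->
       threshold sigma delta g (alpha 0%nat) <= INR k ->
       min_upto eta k <= 2 * delta).
Proof.
  assert (Hg0 : forall j, (1 <= j)%nat -> 0 <= gamma j) by (intros j Hj; specialize (Hgamma j Hj); lra).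
  assert (Wpos : forall n, 0 < wsum sigma gamma (S n)).
  { intros n. unfold wsum. replace (S n - 1)%nat with n by lia.
    eapply Rlt_le_trans; [|apply (wsum_lb sigma g); auto].
    assert (H := geo_ge sigma n Hsigma). assert (0 < INR (S n)) by (apply lt_0_INR; lia).
    nra. }
  assert (Ha : forall n, min_upto eta (S n) * wsum sigma gamma (S n) <=
                 alpha 0%nat - (1 + sigma) ^ (S n) * alpha (S n) + delta * wsum sigma gamma (S n)).
  { intros n. unfold wsum. replace (S n - 1)%nat with n by lia.
    eapply Rle_trans; [apply minW; auto; intros; apply min_le; auto|].
    apply telesc; auto. }
  split.
  - intros [|n] Hk; [lia|].
    specialize (Ha n). specialize (Wpos n).
    set (W := wsum sigma gamma (S n)) in *.
    apply (Rmult_le_reg_r W); auto.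
    replace (((alpha 0%nat - (1 + sigma) ^ S n * alpha (S n)) / W + delta) * W)
      with (alpha 0%nat - (1 + sigma) ^ S n * alpha (S n) + delta * W) by (field; lra).
    exact Ha.
  - intros Hal Hd [|n] Hk Hth; [lia|].
    specialize (Ha n). specialize (Wpos n).
    assert (Hlb : g * sum_f_R0 (fun i => (1 + sigma) ^ i) n <= wsum sigma gamma (S n)) by (unfold wsum; replace (S n - 1)%nat with n by lia; apply wsum_lb; auto).
    assert (Hgeo := geo sigma n). assert (Hge := geo_ge sigma n Hsigma).
    set (W := wsum sigma gamma (S n)) in *.
    set (G := sum_f_R0 (fun i : nat => (1 + sigma) ^ i) n) in *.
    assert (Hp : 0 <= (1 + sigma) ^ S n * alpha (S n)).
    { apply Rmult_le_pos; auto. apply pow_le; lra. }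
    (* suffices alpha0 <= delta * W *)
    assert (Key : alpha 0%nat <= delta * W).
    { assert (Hgd : 0 < g * delta) by nra.
      assert (HB : alpha 0%nat / (g * delta) <= INR (S n) -> alpha 0%nat <= delta * W).
      { intro HB. apply (Rmult_le_compat_r (g * delta)) in HB; [|lra].
        replace (alpha 0%nat / (g * delta) * (g * delta)) with (alpha 0%nat) in HB by (field; lra).
        nra. }
      unfold threshold in Hth. destruct (Req_EM_T sigma 0) as [E|E]; [auto|].
      assert (Hs : 0 < sigma) by lra.
      destruct (Rle_dec (alpha 0%nat / (g * delta)) (INR (S n))) as [Hb|Hb]; [auto|].
      assert (HA : (1 + sigma) / sigma * ln (sigma * alpha 0%nat / (g * delta) + 1) <= INR (S n)).
      { unfold Rmin in Hth. destruct Rle_dec; [auto|lra]. }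
      set (x := sigma * alpha 0%nat / (g * delta)) in *.
      assert (Hx : 0 <= x).
      { unfold x. unfold Rdiv. apply Rmult_le_pos; [apply Rmult_le_pos; auto; lra|].
        left. apply Rinv_0_lt_compat. lra. }
      assert (Hl := ln_lb sigma Hsigma).
      assert (Hln : ln (x + 1) <= ln ((1 + sigma) ^ S n)).
      { rewrite ln_pow by lra.
        assert (HA' : ln (x + 1) <= INR (S n) * (sigma / (1 + sigma))).
        { apply (Rmult_le_compat_r (sigma / (1 + sigma))) in HA.
          2: { unfold Rdiv; apply Rmult_le_pos; [lra|left; apply Rinv_0_lt_compat; lra]. }
          replace ((1 + sigma) / sigma * ln (x + 1) * (sigma / (1 + sigma))) with (ln (x + 1)) in HA
            by (field; lra). exact HA. }
        assert (0 <= INR (S n)) by apply pos_INR. nra. }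
      assert (Hxp : x + 1 <= (1 + sigma) ^ S n).
      { destruct (Rle_dec (x + 1) ((1 + sigma) ^ S n)) as [h|h]; [auto|].
        assert (ln ((1 + sigma) ^ S n) < ln (x + 1)).
        { apply ln_increasing; [apply pow_lt; lra| lra]. }
        lra. }
      assert (HG : x <= sigma * G) by lra.
      unfold x in HG.
      assert (alpha 0%nat / (g * delta) <= G).
      { apply (Rmult_le_reg_l sigma); auto. unfold Rdiv in *. lra. }
      apply (Rmult_le_compat_r (g * delta)) in H; [|lra].
      replace (alpha 0%nat / (g * delta) * (g * delta)) with (alpha 0%nat) in H by (field; lra).
      nra. }
    apply (Rmult_le_reg_r W); auto. nra.
Qed.
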